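(* Let $T$ be a $C_{p^rq^s}$-transfer system, let $(x,y)$ be a vertex, and let $(a,b)$ be the lexicographically smallest vertex in the connected component of $(x,y)$ in $T$. Then $T$ contains the edge $(a,b)\to(x,y)$.
   Context: $p,q$ are distinct primes and $r,s\ge 0$ integers. The subgroups of $C_{p^rq^s}$ are identified with grid points $(i,j)$, $0\le i\le r$, $0\le j\le s$, where $(i,j)$ stands for $C_{p^iq^j}$. A $C_{p^rq^s}$-transfer system is a partial order $\to$ on these vertices such that: $(i_1,j_1)\to(i_2,j_2)$ implies $i_1\le i_2$, $j_1\le j_2$; it is reflexive and transitive; and $(i_1,j_1)\to(i_2,j_2)$ implies $(\min\{i_1,a\},\min\{j_1,b\})\to(\min\{i_2,a\},\min\{j_2,b\})$ for every vertex $(a,b)$. Connected components are those of the underlying undirected graph. Lexicographic order: $(a,b)<_L(c,d)$ if $a<c$, or $a=c$ and $b<d$. *)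

(* Defs.v *)
From mathcomp Require Import all_boot all_order.
Set Implicit Arguments. Unset Strict Implicit. Unset Printing Implicit Defensive.

(* Vertex (i,j) with 0 <= i <= r, 0 <= j <= s stands for the subgroup C_{p^i q^j}
   of C_{p^r q^s}. The primes p, q play no role in the combinatorial definition. *)
Definition vertex (r s : nat) : finType := ('I_r.+1 * 'I_s.+1)%type.

Definition vmin (r s : nat) (u v : vertex r s) : vertex r s :=
  (inord (minn u.1 v.1), inord (minn u.2 v.2)).

(* A C_{p^r q^s}-transfer system: a partial order refining the product order
   and closed under restriction (taking componentwise min with any vertex). *)
Definition transfer_system (r s : nat) (T : rel (vertex r s)) : Prop :=
  [/\ (forall u v, T u v -> (u.1 <= v.1)%N /\ (u.2 <= v.2)%N),
      reflexive T,
      transitive T,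
      antisymmetric T &
      (forall u v w, T u v -> T (vmin u w) (vmin v w))].

Definition undirected (r s : nat) (T : rel (vertex r s)) : rel (vertex r s) :=
  fun u v => T u v || T v u.

Definition same_component (r s : nat) (T : rel (vertex r s)) (u v : vertex r s) : bool :=
  connect (undirected T) u v.

Definition lex_le (r s : nat) (u v : vertex r s) : bool :=
  (u.1 < v.1)%N || ((u.1 == v.1) && (u.2 <= v.2)%N).

(* Main.v *)
Require Import Defs.
From mathcomp Require Import all_boot all_order.

Lemma vmin1 r s (u v : vertex r s) : val (vmin u v).1 = minn u.1 v.1.
Proof. rewrite /vmin /= inordK //; exact: leq_ltn_trans (geq_minl _ _) (ltn_ord _). Qed.

Lemma vmin2 r s (u v : vertex r s) : val (vmin u v).2 = minn u.2 v.2.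
Proof. rewrite /vmin /= inordK //; exact: leq_ltn_trans (geq_minl _ _) (ltn_ord _). Qed.

Lemma vmin_le r s (u v : vertex r s) : (u.1 <= v.1)%N -> (u.2 <= v.2)%N -> vmin v u = u.
Proof.
move=> h1 h2; case: u h1 h2 => u1 u2 h1 h2.
have e1 : (vmin v (u1, u2)).1 = u1 by apply: val_inj; rewrite vmin1 /=; apply/minn_idPr.
have e2 : (vmin v (u1, u2)).2 = u2 by apply: val_inj; rewrite vmin2 /=; apply/minn_idPr.
by rewrite [vmin v _]surjective_pairing e1 e2.
Qed.

Theorem mainTheorem11 (p q r s : nat) (T : rel (vertex r s)) (x a : vertex r s) :
  prime p -> prime q -> p != q ->
  transfer_system T ->
  same_component T x a ->
  (forall c : vertex r s, same_component T x c -> lex_le a c) ->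
  T a x.
Proof.
move=> _ _ _ [Tle Trefl Ttr _ Tres] hxa hmin.
set e := undirected T.
have esym : connect_sym e by apply: sym_connect_sym => u v; rewrite /e /undirected orbC.
have key : forall c, connect e a c -> T a c.
  move=> c /connectP [pth]; elim/last_ind: pth c => [|pth d IH] c /=.
    by move=> _ ->.
  rewrite rcons_path last_rcons => /andP [hp hd] ->.
  have Tac := IH _ hp erefl.
  set c' := last a pth in hd Tac.
  have cxc' : connect e x c'.
    apply: connect_trans (hxa) _; apply/connectP; by exists pth.
  have cxd : connect e x d by apply: connect_trans cxc' (connect1 hd).
  case/orP: hd => hd; first exact: Ttr hd.
  have [d1 d2] := Tle _ _ hd.
  have := Tres _ _ d Tac; rewrite (vmin_le _ _ d c' d1 d2).
  set m := vmin a d => Tmd.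
  have cxm : connect e x m by apply: connect_trans cxd (connect1 _); rewrite /e /undirected Tmd orbT.
  have := hmin _ cxm; rewrite /lex_le.
  have m1 : (m.1 <= a.1)%N by rewrite vmin1 geq_minl.
  have m2 : (m.2 <= a.2)%N by rewrite vmin2 geq_minl.
  case/orP => [h|/andP [/eqP h1 h2]]; first by move: (leq_trans h m1); rewrite ltnn.
  have -> : a = m.
    rewrite [a]surjective_pairing [m]surjective_pairing; congr pair; first exact: h1.
    by apply: val_inj; apply/eqP; rewrite eqn_leq m2 h2.
  exact: Tmd.
apply: key; by rewrite esym.
Qed.
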